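(* Let $f^\pm\in C(B_1^\pm)$, $g\in C(T)$, let $0<\rho<1$, and let $u$ be a bounded viscosity subsolution of the flat problem (F). For $\varepsilon>0$ set $r_\varepsilon=(2\varepsilon\|u\|_{L^\infty(B_1)})^{1/2}$. Then for all sufficiently small $\varepsilon>0$ and every $0<r\le\rho-r_\varepsilon$, the upper $\varepsilon$-envelope $u^\varepsilon$ is a viscosity subsolution of $$\omega(x)F^\pm(D^2u^\varepsilon)=f^\pm_\varepsilon\ \text{ in }B_r^\pm,\qquad (u^\varepsilon)^+_{x_d}-(u^\varepsilon)^-_{x_d}=g_\varepsilon\ \text{ on }T_r=B_r\cap\{x_d=0\},$$ where $f^\pm_\varepsilon=f^\pm-\gamma_{f^\pm}(r_\varepsilon)$ and $g_\varepsilon=g-\gamma_g(r_\varepsilon)$.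
   Context: Flat setting: $x=(x',x_d)$, $B_r^\pm=B_r\cap\{\pm x_d>0\}$, $T=B_1\cap\{x_d=0\}$, $a\in(0,1)$ constant, $\omega(x)=|x_d|^a$; $F^\pm:S(d)\to\mathbb R$ satisfy $\lambda|N|\le F^\pm(M+N)-F^\pm(M)\le\Lambda|N|$ for all symmetric $M$ and $N\ge0$. Flat problem (F): $\omega F^\pm(D^2u)=f^\pm$ in $B_1^\pm$, $u^+_{x_d}-u^-_{x_d}=g$ on $T$. Viscosity subsolution of (F) (and analogously of the problem on $B_r$): $u\in USC$ such that for any $\varphi$ touching $u$ from above at $x_0$: if $x_0\in B^\pm$ and $\varphi$ is $C^2$ near $x_0$ then $\omega(x_0)F^\pm(D^2\varphi(x_0))\ge f^\pm(x_0)$; if $x_0$ lies on $\{x_d=0\}$ and $\varphi\in C^1(\overline{B^+_\delta(x_0)})\cap C^1(\overline{B^-_\delta(x_0)})$ then $\varphi^+_{x_d}(x_0)-\varphi^-_{x_d}(x_0)\ge g(x_0)$, with $\varphi^\pm=\varphi|_{B_\delta(x_0)\cap\{\pm x_d>0\}}$. Modulus of continuity: $\gamma_h(t)=\sup_{|x-y|\le t}|h(x)-h(y)|$. Upper $\varepsilon$-envelope in the $x'$-direction: for $y=(y',y_d)\in\overline{B_\rho}$, $u^\varepsilon(y)=\sup\{u(x',y_d)-\frac1\varepsilon|x'-y'|^2: (x',y_d)\in\overline{B_\rho}\}$. *)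

(* Defs.v *)
From HB Require Import structures.
From mathcomp Require Import all_boot all_order all_algebra.
From mathcomp Require Import all_classical all_reals all_analysis.
Set Implicit Arguments. Unset Strict Implicit. Unset Printing Implicit Defensive.
Import Order.TTheory GRing.Theory Num.Theory.
Import numFieldNormedType.Exports.
Local Open Scope classical_set_scope.
Local Open Scope ring_scope.

(* Points of R^d, d = n.+1, are row vectors 'rV[R]_(n.+1); the last
   coordinate (index ord_max) is x_d. *)
Section FlatDefs.
Variables (R : realType) (n : nat).
Local Notation V := 'rV[R]_(n.+1).

Definition enorm (x : V) : R := Num.sqrt (\sum_(i < n.+1) x 0 i ^+ 2).

Definition evec (i : 'I_n.+1) : V := delta_mx 0 i.

Definition xd (x : V) : R := x 0 ord_max.
Definition xprime (x : V) : V := x - xd x *: evec ord_max.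

Definition ballB (r : R) : set V := [set x | enorm x < r].
Definition ballEp (r : R) : set V := [set x | enorm x < r /\ 0 < xd x].
Definition ballEm (r : R) : set V := [set x | enorm x < r /\ xd x < 0].
Definition flatT (r : R) : set V := [set x | enorm x < r /\ xd x = 0].

Definition omega (a : R) (x : V) : R := `|xd x| `^ a.

Definition mnorm (N : 'M[R]_(n.+1)) : R :=
  sup [set enorm (v *m N) | v in [set v : V | enorm v <= 1]].

Definition symmat (M : 'M[R]_(n.+1)) : Prop := M^T = M.
Definition psd (N : 'M[R]_(n.+1)) : Prop :=
  forall v : V, 0 <= (v *m N *m v^T) 0 0.

(* uniform ellipticity of F : S(d) -> R (F is only constrained on
   symmat matrices) *)
Definition unif_elliptic (lam Lam : R) (F : 'M[R]_(n.+1) -> R) : Prop :=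
  forall M N : 'M[R]_(n.+1), symmat M -> symmat N -> psd N ->
    lam * mnorm N <= F (M + N) - F M <= Lam * mnorm N.

Definition hess (phi : V -> R) (x : V) : 'M[R]_(n.+1) :=
  \matrix_(i, j) derive (fun z => derive phi z (evec j)) x (evec i).

Definition C2_near (phi : V -> R) (x0 : V) : Prop :=
  exists2 del : R, 0 < del & forall y : V, enorm (y - x0) < del ->
    [/\ {for y, continuous phi},
        (forall i, derivable phi y (evec i)),
        (forall i, {for y, continuous (fun z => derive phi z (evec i))}),
        (forall i j, derivable (fun z => derive phi z (evec j)) y (evec i)) &
        (forall i j, {for y, continuous
            (fun z => derive (fun w => derive phi w (evec j)) z (evec i))})].

Definition halfball (s : bool) (x0 : V) (del : R) : set V :=
  [set x | enorm (x - x0) < del /\ (if s then 0 < xd x else xd x < 0)].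

(* phi in C^1(closure of halfball s x0 del); G i is the continuous
   extension to the closure of the partial derivative d_i phi^{+/-} *)
Definition C1_closure (s : bool) (phi : V -> R) (x0 : V) (del : R)
    (G : 'I_n.+1 -> V -> R) : Prop :=
  [/\ {within closure (halfball s x0 del), continuous phi},
      (forall i, {within closure (halfball s x0 del), continuous (G i)}) &
      (forall y, halfball s x0 del y -> forall i,
         derivable phi y (evec i) /\ derive phi y (evec i) = G i y)].

Definition touches_above (D : set V) (u phi : V -> R) (x0 : V) : Prop :=
  phi x0 = u x0 /\ exists2 del : R, 0 < del &
    forall x, D x -> enorm (x - x0) < del -> u x <= phi x.

Definition usc_on (D : set V) (u : V -> R) : Prop :=
  forall x, D x -> forall e : R, 0 < e -> exists2 del : R, 0 < del &
    forall y, D y -> enorm (y - x) < del -> u y < u x + e.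

(* The right-hand sides are extended-real valued (to allow f - gamma with an
   infinite modulus of continuity). *)
Definition subsolution (a r : R) (Fp Fm : 'M[R]_(n.+1) -> R)
    (fp fm g : V -> \bar R) (u : V -> R) : Prop :=
  [/\ usc_on (ballB r) u,
      (forall phi x0, ballEp r x0 -> touches_above (ballB r) u phi x0 ->
         C2_near phi x0 -> (fp x0 <= (omega a x0 * Fp (hess phi x0))%:E)%E),
      (forall phi x0, ballEm r x0 -> touches_above (ballB r) u phi x0 ->
         C2_near phi x0 -> (fm x0 <= (omega a x0 * Fm (hess phi x0))%:E)%E) &
      (forall phi x0 del Gp Gm, flatT r x0 -> touches_above (ballB r) u phi x0 ->
         0 < del -> C1_closure true phi x0 del Gp ->
         C1_closure false phi x0 del Gm ->
         (g x0 <= (Gp ord_max x0 - Gm ord_max x0)%:E)%E)].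

Definition modc (D : set V) (h : V -> R) (t : R) : \bar R :=
  ereal_sup [set z : \bar R | exists x y, [/\ D x, D y, enorm (x - y) <= t &
                                             z = (`|h x - h y|)%:E]].

Definition supnorm (u : V -> R) : R := sup [set `|u x| | x in ballB 1].

Definition uenv (rho eps : R) (u : V -> R) (y : V) : R :=
  sup [set u x - enorm (xprime x - xprime y) ^+ 2 / eps
      | x in [set x : V | enorm x <= rho /\ xd x = xd y]].

End FlatDefs.

(* Main.v *)
Require Import Defs.
From HB Require Import structures.
From mathcomp Require Import all_boot all_order all_algebra.
From mathcomp Require Import all_classical all_reals all_analysis.
From mathcomp Require Import ring lra.
Set Implicit Arguments. Unset Strict Implicit. Unset Printing Implicit Defensive.
Import Order.TTheory GRing.Theory Num.Theory.
Import numFieldNormedType.Exports.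
Local Open Scope classical_set_scope.
Local Open Scope ring_scope.

Section Enorm.
Variables (R : realType) (n : nat).
Local Notation V := 'rV[R]_(n.+1).
Implicit Types x y z : V.

Lemma sumsq_ge0 x : 0 <= \sum_(i < n.+1) x 0 i ^+ 2.
Proof. by apply: sumr_ge0 => i _; exact: sqr_ge0. Qed.

Lemma enorm_ge0 x : 0 <= enorm x.
Proof. exact: sqrtr_ge0. Qed.

Lemma enorm_sq x : enorm x ^+ 2 = \sum_(i < n.+1) x 0 i ^+ 2.
Proof. by rewrite /enorm sqr_sqrtr // sumsq_ge0. Qed.

Lemma enormN x : enorm (- x) = enorm x.
Proof. by rewrite /enorm; congr Num.sqrt; apply: eq_bigr => i _; rewrite mxE sqrrN. Qed.

Lemma enormB x y : enorm (x - y) = enorm (y - x).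
Proof. by rewrite -enormN opprB. Qed.

Lemma enorm_coord x i : `|x 0 i| <= enorm x.
Proof.
rewrite -sqrtr_sqr; apply: ler_wsqrtr.
rewrite (bigD1 i) //= lerDl; apply: sumr_ge0 => j _; exact: sqr_ge0.
Qed.

Lemma cauchy_schwarz x y :
  (\sum_(i < n.+1) x 0 i * y 0 i) ^+ 2 <=
  (\sum_(i < n.+1) x 0 i ^+ 2) * (\sum_(i < n.+1) y 0 i ^+ 2).
Proof.
set A := \sum_(i < n.+1) x 0 i ^+ 2; set B := \sum_(i < n.+1) y 0 i ^+ 2.
set C := \sum_(i < n.+1) x 0 i * y 0 i.
have E : \sum_(i < n.+1) \sum_(j < n.+1) (x 0 i * y 0 j - x 0 j * y 0 i) ^+ 2
   = 2 * (A * B - C ^+ 2).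
  have E1 : forall i j, (x 0 i * y 0 j - x 0 j * y 0 i) ^+ 2 =
     x 0 i ^+ 2 * y 0 j ^+ 2 + x 0 j ^+ 2 * y 0 i ^+ 2
       - 2 * ((x 0 i * y 0 i) * (x 0 j * y 0 j)).
    by move=> i j; ring.
  under eq_bigr do under eq_bigr do rewrite E1.
  under eq_bigr do rewrite sumrB big_split.
  rewrite sumrB big_split /=.
  have -> : \sum_(i < n.+1) \sum_(j < n.+1) x 0 i ^+ 2 * y 0 j ^+ 2 = A * B.
    by rewrite mulr_suml; apply: eq_bigr => i _; rewrite mulr_sumr.
  have -> : \sum_(i < n.+1) \sum_(j < n.+1) x 0 j ^+ 2 * y 0 i ^+ 2 = A * B.
    rewrite /A /B mulrC mulr_suml; apply: eq_bigr => i _; rewrite mulr_sumr.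
    by apply: eq_bigr => j _; rewrite mulrC.
  have -> : \sum_(i < n.+1) \sum_(j < n.+1) 2 * (x 0 i * y 0 i * (x 0 j * y 0 j))
      = 2 * C ^+ 2.
    rewrite /C expr2 mulr_suml mulr_sumr; apply: eq_bigr => i _.
    rewrite !mulr_sumr; apply: eq_bigr => j _; ring.
  ring.
have : 0 <= 2 * (A * B - C ^+ 2).
  by rewrite -E; apply: sumr_ge0 => i _; apply: sumr_ge0 => j _; exact: sqr_ge0.
by rewrite pmulr_rge0 // subr_ge0.
Qed.

Lemma enorm_triangle x y : enorm (x + y) <= enorm x + enorm y.
Proof.
have S0 : 0 <= enorm x + enorm y by rewrite addr_ge0 // enorm_ge0.
apply: le_trans (ler_wsqrtr (_ : _ <= (enorm x + enorm y) ^+ 2)) _;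
  last by rewrite sqrtr_sqr ger0_norm.
have E : \sum_(i < n.+1) (x + y) 0 i ^+ 2 = \sum_(i < n.+1) x 0 i ^+ 2
   + 2 * \sum_(i < n.+1) (x 0 i * y 0 i) + \sum_(i < n.+1) y 0 i ^+ 2.
  rewrite mulr_sumr -!big_split /=; apply: eq_bigr => i _; rewrite mxE; ring.
rewrite E -!enorm_sq sqrrD lerD2r mulr2n.
suff H : \sum_(i < n.+1) x 0 i * y 0 i <= enorm x * enorm y by lra.
apply: le_trans (ler_norm _) _.
rewrite -[enorm x * enorm y]ger0_norm ?mulr_ge0 ?enorm_ge0 // -!sqrtr_sqr.
apply: ler_wsqrtr; rewrite exprMn !enorm_sq.
exact: cauchy_schwarz.
Qed.

Lemma enorm_le_dist x y z : enorm (x - z) <= enorm (x - y) + enorm (y - z).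
Proof. have -> : x - z = (x - y) + (y - z) by rewrite addrA subrK.
exact: enorm_triangle. Qed.

Lemma mxnorm_coord x i : `|x 0 i| <= `|x|.
Proof.
have /mapP[j Hj ->] : `|x 0 i| \in [seq `|x k.1 k.2| | k : 'I_1 * 'I_n.+1].
  by apply/mapP; exists (ord0, i) => //=; rewrite mem_enum.
by rewrite [leRHS]/Num.norm /= mx_normrE; apply/bigmax_geP; right => /=; exists j.
Qed.

Lemma mxnorm_le_enorm x : `|x| <= enorm x.
Proof.
rewrite [leLHS]/Num.norm /= mx_normrE; apply/bigmax_leP; split => [|[i j] _ /=].
  exact: enorm_ge0.
by rewrite (ord1 i); exact: enorm_coord.
Qed.

Lemma enorm_le_mxnorm x : enorm x <= n.+1%:R * `|x|.
Proof.
have N0 : 0 <= n.+1%:R * `|x| by rewrite mulr_ge0.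
rewrite -[leRHS]ger0_norm // -sqrtr_sqr; apply: ler_wsqrtr.
apply: le_trans (_ : \sum_(i < n.+1) `|x| ^+ 2 <= _).
  apply: ler_sum => i _; rewrite -real_normK ?num_real //.
  by rewrite lerXn2r ?nnegrE ?mxnorm_coord.
rewrite sumr_const card_ord exprMn -mulr_natr.
have k1 : (1 : R) <= n.+1%:R by rewrite ler1n.
have a0 : 0 <= `|x| ^+ 2 by exact: sqr_ge0.
move: k1 a0; set k := n.+1%:R; set a := `|x| ^+ 2 => k1 a0; nra.
Qed.

Lemma nbhs_enorm (p : V) (d : R) : 0 < d -> nbhs p [set y | enorm (y - p) < d].
Proof.
move=> d0; apply/nbhs_ballP; exists (d / n.+1%:R) => /=.
  by rewrite divr_gt0.
move=> y; rewrite -ball_normE /= => pyd; rewrite enormB; apply: le_lt_trans (enorm_le_mxnorm _) _.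
by rewrite mulrC -ltr_pdivlMr.
Qed.

Lemma nbhs_enormP (p : V) (N : set V) : nbhs p N ->
  exists2 d : R, 0 < d & forall y, enorm (y - p) < d -> N y.
Proof.
move=> /nbhs_ballP [e e0 He]; exists e => // y yp; apply: He.
rewrite -ball_normE /=.
by rewrite -normrN opprB; apply: le_lt_trans (mxnorm_le_enorm _) yp.
Qed.

Lemma xdD x y : xd (x + y) = xd x + xd y.
Proof. by rewrite /xd mxE. Qed.
Lemma xdN x : xd (- x) = - xd x.
Proof. by rewrite /xd mxE. Qed.
Lemma xdB x y : xd (x - y) = xd x - xd y.
Proof. by rewrite xdD xdN. Qed.

Lemma xprimeB x y : xd x = xd y -> xprime x - xprime y = x - y.
Proof. by move=> H; rewrite /xprime H opprB addrA subrK. Qed.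

Lemma xd_le x : `|xd x| <= enorm x.
Proof. exact: enorm_coord. Qed.


Lemma cballB_compact (rho : R) : compact [set x : V | enorm x <= rho].
Proof.
apply: bounded_closed_compact.
  rewrite /bounded_near; exists rho; split; first exact: num_real.
  move=> M HM x /= Ax; apply: le_trans (mxnorm_le_enorm _) _.
  by apply: le_trans Ax (ltW HM).
move=> p clp; apply/negPn/negP; rewrite -ltNge => hp.
have d0 : 0 < enorm p - rho by rewrite subr_gt0.
have [y [/= yK yN]] := clp _ (nbhs_enorm p d0).
have := enorm_le_dist p y 0; rewrite !subr0 enormB; lra.
Qed.

Lemma cluster_pt (rho : R) (A : R -> set V) :
  (forall d, 0 < d -> A d !=set0) ->
  (forall d1 d2, 0 < d1 -> d1 <= d2 -> A d1 `<=` A d2) ->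
  (forall d, 0 < d -> A d `<=` [set x | enorm x <= rho]) ->
  exists xb, enorm xb <= rho /\ forall eta d, 0 < eta -> 0 < d ->
     exists x, A d x /\ enorm (x - xb) < eta.
Proof.
move=> An0 Amon AK.
pose F := filter_from [set d : R | 0 < d] A.
have FF : Filter F.
  apply: filter_from_filter; first by exists 1%R => /=.
  move=> i j /= i0 j0; exists (Order.min i j) => /=; first by rewrite lt_min i0.
  by move=> x Ax; split; apply: Amon x Ax; rewrite ?lt_min ?i0 ?ge_min ?lexx ?orbT.
have PF : ProperFilter F by apply: filter_from_proper => // i /An0.
have FK : F [set x | enorm x <= rho] by exists 1%R; [exact: ltr01 | exact: AK ltr01].
have [xb [xbK clxb]] := cballB_compact PF FK.
exists xb; split => // eta d eta0 d0.
have [x [Ax Bx]] := clxb (A d) _ (ex_intro2 _ _ d d0 (fun x h => h)) (nbhs_enorm xb eta0).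
by exists x.
Qed.


Lemma key (u : V -> R) (rho eps c : R) (y : V) :
  0 < eps -> 0 < rho -> rho < 1 -> enorm y <= 1 ->
  usc_on (ballB 1) u ->
  (forall d, 0 < d -> exists x z, [/\ enorm x <= rho, enorm (z - y) < d,
        xd x = xd z & c - d < u x - enorm (x - z) ^+ 2 / eps]) ->
  exists xb, [/\ enorm xb <= rho, xd xb = xd y &
        c <= u xb - enorm (xb - y) ^+ 2 / eps].
Proof.
move=> eps0 rho0 rho1 y1 usc H.
pose A d := [set x | enorm x <= rho /\ exists z, [/\ enorm (z - y) < d,
        xd x = xd z & c - d < u x - enorm (x - z) ^+ 2 / eps]].
have [|||xb [xbK Hcl]] := @cluster_pt rho A.
- move=> d d0; have [x [z [? ? ? ?]]] := H d d0; exists x; split => //.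
  by exists z.
- move=> d1 d2 d10 d12 x [xK [z [zd xz Hz]]]; split => //; exists z; split => //.
    exact: lt_le_trans d12.
  lra.
- by move=> d _ x [].
have xbd : xd xb = xd y.
  apply/eqP; rewrite -subr_eq0 -normr_eq0; apply/negPn/negP => hne.
  have del0 : 0 < `|xd xb - xd y| / 2 by rewrite divr_gt0 // lt_def hne /=.
  have [x [[_ [z [zy xz _]]] xxb]] := Hcl _ _ del0 del0.
  have : `|xd xb - xd y| <= `|xd (x - xb)| + `|xd (z - y)|.
    rewrite !xdB xz [`|xd z - xd xb|]distrC.
    have -> : xd xb - xd y = (xd xb - xd z) + (xd z - xd y) by rewrite addrA subrK.
    exact: ler_normD.
  have := xd_le (x - xb); have := xd_le (z - y); lra.
exists xb; split => //.
rewrite leNgt; apply/negP => Hlt.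
set G := u xb - enorm (xb - y) ^+ 2 / eps in Hlt.
set e0 := c - G.
have e00 : 0 < e0 by rewrite subr_gt0.
have xbB : ballB 1 xb by rewrite /ballB /=; lra.
have e4 : 0 < e0 / 4 by lra.
have [eta eta0 Heta] := usc xb xbB (e0 / 4) e4.
pose k := eps * e0 / 40.
have k0 : 0 < k by rewrite /k !divr_gt0 ?mulr_gt0.
pose t := Order.min eta k.
have t0 : 0 < t by rewrite lt_min eta0 k0.
pose d := Order.min (Order.min (e0 / 4) k) 1.
have d0 : 0 < d by rewrite !lt_min k0 ltr01 divr_gt0.
have [x [[xK [z [zy xz Hc]]] xxb]] := Hcl _ _ t0 d0.
have dle : d <= e0 / 4 by rewrite /d !ge_min lexx.
have dk : d <= k by rewrite /d !ge_min lexx orbT.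
have d1 : d <= 1 by rewrite /d !ge_min lexx orbT.
have tk : t <= k by rewrite /t ge_min lexx orbT.
have te : t <= eta by rewrite /t ge_min lexx.
have ux : u x < u xb + e0 / 4.
  apply: Heta; first by rewrite /ballB /=; lra.
  lra.
set a := enorm (xb - y).
set b := enorm (x - z).
have a0 : 0 <= a := enorm_ge0 _.
have b0 : 0 <= b := enorm_ge0 _.
have hab : a - b <= enorm (x - xb) + enorm (z - y).
  have h1 := enorm_le_dist xb x y; have h2 := enorm_le_dist x z y.
  rewrite (enormB xb x) in h1.
  rewrite /a /b; lra.
have ha : a <= 2.
  have := enorm_le_dist xb 0 y; rewrite !subr0 sub0r enormN /a; lra.
have hb : b <= 3.
  have h1 := enorm_le_dist x y z; have h2 := enorm_le_dist x 0 y.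
  rewrite !subr0 sub0r enormN in h2; rewrite (enormB y z) in h1; rewrite /b; lra.
have hs : enorm (x - xb) + enorm (z - y) <= 2 * k by lra.
have hsq : a ^+ 2 - b ^+ 2 <= (2 * k) * 5.
  have -> : a ^+ 2 - b ^+ 2 = (a - b) * (a + b) by ring.
  apply: le_trans (_ : _ <= (2 * k) * (a + b)) _.
    by apply: ler_wpM2r; [exact: addr_ge0 | exact: le_trans hab hs].
  by apply: ler_wpM2l; [rewrite mulr_ge0 // ltW | lra].
have hq : (a ^+ 2 - b ^+ 2) / eps <= e0 / 4.
  rewrite ler_pdivrMr //; apply: le_trans hsq _.
  rewrite /k; lra.
rewrite mulrBl in hq.
move: Hc; rewrite -/b => Hc.
have : c - d < u xb + e0 / 4 - b ^+ 2 / eps by lra.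
have eE : e0 = c - G by []. have GE : G = u xb - a ^+ 2 / eps by [].
lra.
Qed.

Section Env.
Variables (u : V -> R) (rho eps M : R).
Hypotheses (eps0 : 0 < eps) (rho0 : 0 < rho) (rho1 : rho < 1)
  (uM : forall x, ballB 1 x -> u x <= M) (usc : usc_on (ballB 1) u).

Local Notation S y := [set u x - enorm (xprime x - xprime y) ^+ 2 / eps
      | x in [set x : V | enorm x <= rho /\ xd x = xd y]].

Lemma S_ub y : has_ubound (S y).
Proof.
exists M => _ [x [xK _] <-]; apply: (@le_trans _ _ (u x)).
  by rewrite gerBl divr_ge0 ?sqr_ge0 // ltW.
apply: uM; rewrite /ballB /=. exact: le_lt_trans xK rho1.
Qed.

Lemma uenv_ub x y : enorm x <= rho -> xd x = xd y ->
  u x - enorm (x - y) ^+ 2 / eps <= uenv rho eps u y.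
Proof.
move=> xK xy; apply: (ub_le_sup (S_ub y)).
by exists x => //; rewrite xprimeB.
Qed.

Lemma uenv_approx y e : enorm y <= rho -> 0 < e ->
  exists x, [/\ enorm x <= rho, xd x = xd y &
     uenv rho eps u y - e < u x - enorm (x - y) ^+ 2 / eps].
Proof.
move=> yK e0.
have hne : S y !=set0 by exists (u y - enorm (xprime y - xprime y) ^+ 2 / eps), y.
have hlt : uenv rho eps u y - e < sup (S y) by rewrite gtrBl.
have [_ [x [xK xy] <-] Hx] := sup_gt hne hlt.
by exists x; split => //; rewrite -xprimeB.
Qed.

Lemma uenv_max y : enorm y <= rho ->
  exists x, [/\ enorm x <= rho, xd x = xd y &
     uenv rho eps u y = u x - enorm (x - y) ^+ 2 / eps].
Proof.
move=> yK.
have [||xb [xbK xby Hc]] := @key u rho eps (uenv rho eps u y) y eps0 rho0 rho1 _ usc.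
- exact: le_trans yK (ltW rho1).
- move=> d d0; have [x [xK xy Hx]] := uenv_approx yK d0.
  by exists x, y; split => //; rewrite subrr /enorm big1 ?sqrtr0 // => i _; rewrite mxE expr0n.
exists xb; split => //; apply/eqP; rewrite eq_le Hc /=.
exact: uenv_ub.
Qed.

Lemma uenv_usc r : 0 < r -> r <= rho -> usc_on (ballB r) (uenv rho eps u).
Proof.
move=> r0 rr y yB e e0.
apply/not_exists2P => Hn.
have yK : enorm y <= rho by exact: ltW (lt_le_trans yB rr).
have [||xb [xbK xby Hc]] := @key u rho eps (uenv rho eps u y + e / 2) y eps0 rho0 rho1 _ usc.
- exact: le_trans yK (ltW rho1).
- move=> d d0.
  case: (Hn d) => [/(_ d0) //|/existsNP [z /not_implyP [zB /not_implyP [zy]]]].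
  move=> /negP; rewrite -leNgt => Hz.
  have zK : enorm z <= rho by exact: ltW (lt_le_trans zB rr).
  have e2 : 0 < e / 2 by rewrite divr_gt0.
  have [x [xK xz Hx]] := uenv_approx zK e2.
  exists x, z; split => //; lra.
have := uenv_ub xbK xby; lra.
Qed.

End Env.


Lemma addBKC (x y : V) : x + (y - x) = y.
Proof. by rewrite addrC subrK. Qed.

Lemma derive_shift (f : V -> R) (h a v : V) (c : R) :
  derive (fun x : V => f (x + h) + c) a v = derive f (a + h) v.
Proof.
rewrite /derive; apply: (f_equal (fun g : R -> R => lim (g @ 0^'))); apply/funext => t /=.
by rewrite addrA; congr (_ *: _); ring.
Qed.

Lemma derivable_shift (f : V -> R) (h a v : V) (c : R) :
  derivable (fun x : V => f (x + h) + c) a v = derivable f (a + h) v.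
Proof.
rewrite /derivable; apply: (f_equal (fun g : R -> R => cvg (g @ 0^'))); apply/funext => t /=.
by rewrite addrA; congr (_ *: _); ring.
Qed.

Lemma cont_shift (F : V -> R) (h y : V) (c : R) :
  {for (y + h), continuous F} -> {for y, continuous (fun x : V => F (x + h) + c)}.
Proof.
move=> HF.
have Hs : {for y, continuous (fun x : V => x + h)}.
  exact: (cvgD cvg_id (cvg_cst h)).
have H1 := @continuous_comp _ _ _ (fun x : V => x + h) F y Hs HF.
have Hc : {for (F (y + h)), continuous (fun z : R => z + c)}.
  exact: (cvgD cvg_id (cvg_cst c)).
have := @continuous_comp _ _ _ (fun x : V => F (x + h)) (fun z : R => z + c) y H1 Hc.
by [].
Qed.

End Enorm.

Section Shift.
Variables (R : realType) (n : nat).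
Local Notation V := 'rV[R]_(n.+1).
Implicit Types x y z : V.

Lemma dshiftE (phi : V -> R) (h v : V) (c : R) :
  (fun z : V => derive (fun x : V => phi (x + h) + c) z v) = (fun z : V => derive phi (z + h) v + 0).
Proof. by apply/funext => z; rewrite derive_shift addr0. Qed.

Lemma addBB (y xs h : V) : y + h - (xs + h) = y - xs.
Proof. by rewrite opprD addrACA subrr addr0. Qed.

Lemma C2_shift (phi : V -> R) (h xs : V) (c : R) :
  C2_near phi (xs + h) -> C2_near (fun x : V => phi (x + h) + c) xs.
Proof.
move=> [del del0 H]; exists del => // y yd.
have yd' : enorm (y + h - (xs + h)) < del by rewrite addBB.
case: (H _ yd') => c0 d1 c1 d2 c2; split.
- exact: cont_shift c0.
- by move=> i; rewrite derivable_shift; exact: d1.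
- by move=> i; rewrite dshiftE; exact: cont_shift (c1 i).
- by move=> i j; rewrite dshiftE (derivable_shift (fun w : V => derive phi w (evec R j))); exact: d2.
- move=> i j; rewrite dshiftE.
  have -> : (fun z : V => derive (fun x : V => derive phi (x + h) (evec R j) + 0) z (evec R i))
     = (fun z : V => derive (fun w : V => derive phi w (evec R j)) (z + h) (evec R i) + 0).
    by apply/funext => z; rewrite (derive_shift (fun w : V => derive phi w (evec R j))) addr0.
  exact: cont_shift (c2 i j).
Qed.

Lemma hess_shift (phi : V -> R) (h xs : V) (c : R) :
  hess (fun x : V => phi (x + h) + c) xs = hess phi (xs + h).
Proof.
apply/matrixP => i j; rewrite !mxE dshiftE.
by rewrite (derive_shift (fun w : V => derive phi w (evec R j))).
Qed.

Lemma closure_shift (A B : set V) (h : V) :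
  (forall x, B x -> A (x + h)) -> forall x, closure B x -> closure A (x + h).
Proof.
move=> BA x clx N /nbhs_enormP [d d0 Hd].
have [y [By yd]] := clx _ (nbhs_enorm x d0).
exists (y + h); split; first exact: BA.
by apply: Hd; rewrite addBB.
Qed.

Lemma within_shift (A B : set V) (F : V -> R) (h : V) :
  (forall x, B x -> A (x + h)) -> {within A, continuous F} ->
  {within B, continuous (fun x : V => F (x + h))}.
Proof.
move=> BA /subspace_continuousP HA; apply/subspace_continuousP => x Bx.
move=> P /(HA _ (BA _ Bx)) /=.
rewrite /within /= => /nbhs_enormP [d d0 Hd].
apply: filterS (nbhs_enorm x d0) => y yd By.
by apply: Hd; [rewrite addBB | exact: BA].
Qed.

Lemma within_addc (A : set V) (F : V -> R) (c : R) :
  {within A, continuous F} -> {within A, continuous (fun z : V => F z + c)}.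
Proof.
move=> /subspace_continuousP HA; apply/subspace_continuousP => x Ax.
exact: (cvgD (HA x Ax) (cvg_cst c)).
Qed.

End Shift.

Section Main.
Variables (R : realType) (n : nat).
Local Notation V := 'rV[R]_(n.+1).
Implicit Types x y z : V.

Lemma shiftB (x y z : V) : x + (y - z) - y = x - z.
Proof. by rewrite (addrC y) addrA addrK. Qed.

Lemma enorm0 : enorm (0 : V) = 0.
Proof. by rewrite /enorm big1 ?sqrtr0 // => i _; rewrite mxE expr0n. Qed.

Lemma C1_shift s (phi : V -> R) (y0 xs : V) del (G : 'I_n.+1 -> V -> R) c :
  xd (y0 - xs) = 0 -> C1_closure s phi y0 del G ->
  C1_closure s (fun x : V => phi (x + (y0 - xs)) + c) xs del
    (fun i x => G i (x + (y0 - xs))).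
Proof.
move=> hd [cphi cG dG].
have hb : forall x, halfball s xs del x -> halfball s y0 del (x + (y0 - xs)).
  move=> x [xd1 xd2]; split.
    by rewrite shiftB.
  by rewrite xdD hd addr0.
have hcl := closure_shift hb.
split.
- by have := within_shift hcl (within_addc (c:=c) cphi).
- by move=> i; have := within_shift hcl (cG i).
- move=> y By i; have [d1 d2] := dG _ (hb y By) i.
  by rewrite derivable_shift derive_shift.
Qed.

Lemma ereal_aux (a b : R) (m : \bar R) :
  (`|a - b|%:E <= m)%E -> (a%:E - m <= b%:E)%E.
Proof.
case: m => [r'| |] //=; rewrite ?lee_fin => H.
  have := ler_norm (a - b); lra.
by rewrite leNye.
Qed.

Lemma modc_ge (D : set V) (f : V -> R) (t : R) x y :
  D x -> D y -> enorm (x - y) <= t -> (`|f x - f y|%:E <= modc D f t)%E.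
Proof.
move=> Dx Dy xy; apply: ereal_sup_ubound; exists x, y; split => //.
Qed.

Variables (u : V -> R) (rho eps M r : R).
Hypotheses (eps0 : 0 < eps) (rho0 : 0 < rho) (rho1 : rho < 1)
  (uM : forall x, ballB 1 x -> `|u x| <= M) (usc : usc_on (ballB 1) u)
  (r0 : 0 < r) (rr : r <= rho - Num.sqrt (2 * eps * supnorm u)).

Local Notation reps := (Num.sqrt (2 * eps * supnorm u)).

Lemma usup x : ballB 1 x -> `|u x| <= supnorm u.
Proof.
move=> Bx; apply: (ub_le_sup (_ : has_ubound _)).
  by exists M => _ [z Bz <-]; exact: uM.
by exists x.
Qed.

Lemma uM' x : ballB 1 x -> u x <= M.
Proof. by move=> Bx; apply: le_trans (ler_norm _) (uM Bx). Qed.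

Lemma rrho : r <= rho.
Proof. by apply: le_trans rr _; rewrite gerBl sqrtr_ge0. Qed.

Lemma transfer (phi : V -> R) y0 : ballB r y0 ->
  touches_above (ballB r) (uenv rho eps u) phi y0 ->
  exists xs, [/\ enorm xs < rho, xd xs = xd y0, enorm (y0 - xs) <= reps &
   touches_above (ballB 1) u
     (fun x : V => phi (x + (y0 - xs)) + enorm (y0 - xs) ^+ 2 / eps) xs].
Proof.
move=> y0B [phiy0 [del del0 Hdel]].
have rr' : r <= rho - reps := rr.
have rho1' : rho < 1 := rho1.
have y0r : enorm y0 < r := y0B.
have y0K : enorm y0 <= rho by exact: ltW (lt_le_trans y0r rrho).
have [xs [xsK xsd Hxs]] := uenv_max eps0 rho0 rho1 uM' usc y0K.
have h0 := uenv_ub eps0 rho1 uM' y0K (erefl (xd y0)).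
rewrite subrr enorm0 expr0n /= mul0r subr0 in h0.
have B1 z : enorm z <= rho -> ballB 1 z.
  by move=> zK; rewrite /ballB /=; exact: le_lt_trans zK rho1.
have Sx := usup (B1 _ xsK); have Sy := usup (B1 _ y0K).
set q := enorm (xs - y0) ^+ 2 / eps in Hxs.
have hq : q <= 2 * supnorm u.
  have := ler_norm (u xs); have := ler_norm (- u y0); rewrite normrN; lra.
have hreps : enorm (y0 - xs) <= reps.
  rewrite -[enorm (y0 - xs)]ger0_norm ?enorm_ge0 // -sqrtr_sqr.
  apply: ler_wsqrtr; move: hq; rewrite /q enormB ler_pdivrMr //.
  by rewrite [2 * eps * _]mulrAC mulrC.
have hxs : enorm xs < rho.
  have := enorm_le_dist xs y0 0; rewrite !subr0 enormB.
  have := enorm_ge0 (y0 - xs); lra.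
exists xs; split => //.
split.
  rewrite addBKC phiy0 Hxs /q enormB; ring.
exists (Order.min del (Order.min (rho - enorm xs) (r - enorm y0))).
  by rewrite !lt_min del0 !subr_gt0 hxs y0r.
move=> x Bx; rewrite !lt_min => /andP[xd1 /andP[xd2 xd3]].
have e1 : x + (y0 - xs) - y0 = x - xs by rewrite shiftB.
have Bxh : ballB r (x + (y0 - xs)).
  rewrite /ballB /=; have := enorm_le_dist (x + (y0 - xs)) y0 0.
  rewrite !subr0 e1; lra.
have hd1 : enorm (x + (y0 - xs) - y0) < del by rewrite e1.
have := Hdel _ Bxh hd1.
have xK : enorm x <= rho.
  have := enorm_le_dist x xs 0; rewrite !subr0; lra.
have hd : xd x = xd (x + (y0 - xs)) by rewrite xdD xdB xsd subrr addr0.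
have := uenv_ub eps0 rho1 uM' xK hd.
have -> : x - (x + (y0 - xs)) = - (y0 - xs) by rewrite opprD addrA subrr add0r.
rewrite enormN; lra.
Qed.

End Main.

Unset Implicit Arguments. Set Strict Implicit.

Theorem mainTheorem9 (R : realType) (n : nat) (a lam Lam rho : R)
  (Fp Fm : 'M[R]_(n.+1) -> R) (fp fm g u : 'rV[R]_(n.+1) -> R) :
  0 < a < 1 -> 0 < lam <= Lam ->
  unif_elliptic lam Lam Fp -> unif_elliptic lam Lam Fm ->
  {within @ballEp R n 1, continuous fp} -> {within @ballEm R n 1, continuous fm} ->
  {within @flatT R n 1, continuous g} ->
  0 < rho < 1 ->
  (exists M : R, forall x, @ballB R n 1 x -> `|u x| <= M) ->
  subsolution a 1 Fp Fm (fun x => (fp x)%:E) (fun x => (fm x)%:E)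
    (fun x => (g x)%:E) u ->
  exists2 eps0 : R, 0 < eps0 & forall eps : R, 0 < eps < eps0 ->
    let reps := Num.sqrt (2 * eps * supnorm u) in
    forall r : R, 0 < r -> r <= rho - reps ->
      subsolution a r Fp Fm
        (fun x => ((fp x)%:E - modc (@ballEp R n 1) fp reps)%E)
        (fun x => ((fm x)%:E - modc (@ballEm R n 1) fm reps)%E)
        (fun x => ((g x)%:E - modc (@flatT R n 1) g reps)%E)
        (uenv rho eps u).
Proof.
move=> _ _ _ _ _ _ _ /andP[rho0 rho1] [M HM] [usc sp sm sg].
have uM := uM' HM.
exists 1 => // eps /andP[eps0 _] reps r r0 rr.
have rr' : r <= rho - Num.sqrt (2 * eps * supnorm u) := rr.
have rrh := rrho rr'.
have Tr := transfer eps0 rho0 rho1 HM usc rr'.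
have lt1 x : enorm x < r -> enorm x < 1.
  by move=> xr; apply: lt_le_trans xr _; apply: le_trans rrh (ltW rho1).
split.
- exact: (uenv_usc eps0 rho0 rho1 uM usc r0 rrh).
- move=> phi x0 [x0r x0p] Ht C2.
  have [xs [xsK xsd hrep Hu]] := Tr phi x0 x0r Ht.
  have C2p : C2_near phi (xs + (x0 - xs)) by rewrite addBKC.
  have Ep : ballEp 1 xs by split; [exact: lt_trans xsK rho1 | rewrite xsd].
  have := sp _ xs Ep Hu (C2_shift _ C2p).
  rewrite hess_shift addBKC /omega xsd => H.
  apply: le_trans H; apply: ereal_aux; apply: modc_ge => //.
  by split => //; exact: lt1.
- move=> phi x0 [x0r x0p] Ht C2.
  have [xs [xsK xsd hrep Hu]] := Tr phi x0 x0r Ht.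
  have C2p : C2_near phi (xs + (x0 - xs)) by rewrite addBKC.
  have Em : ballEm 1 xs by split; [exact: lt_trans xsK rho1 | rewrite xsd].
  have := sm _ xs Em Hu (C2_shift _ C2p).
  rewrite hess_shift addBKC /omega xsd => H.
  apply: le_trans H; apply: ereal_aux; apply: modc_ge => //.
  by split => //; exact: lt1.
- move=> phi x0 del Gp Gm [x0r x0d] Ht del0 C1p C1m.
  have [xs [xsK xsd hrep Hu]] := Tr phi x0 x0r Ht.
  have hd : xd (x0 - xs) = 0 by rewrite xdB xsd subrr.
  have Ft : flatT 1 xs by split; [exact: lt_trans xsK rho1 | rewrite xsd].
  have := sg _ xs del _ _ Ft Hu del0 (C1_shift _ hd C1p) (C1_shift _ hd C1m).
  rewrite /= addBKC => H.
  apply: le_trans H; apply: ereal_aux; apply: modc_ge => //.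
  by split => //; exact: lt1.
Qed.
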